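(* Let $\mathbb{K}\in\{\mathbb{R},\mathbb{C}\}$, $d\ge4$, let $g\in\mathsf{GL}_d(\mathbb{K})$ satisfy $\sigma_d(g)=\sigma_1(g)^{-1}$, and let $0<\epsilon<\frac{2}{d-1}$. Then there exists $k\in\{1,\dots,d-1\}$ such that $\sigma_k(g)\ge\sigma_1(g)^{1-d\epsilon}$ and $\frac{\sigma_k}{\sigma_{k+1}}(g)\ge\sigma_1(g)^{\epsilon}$.
   Context: $\sigma_1(g)\ge\dots\ge\sigma_d(g)$ are the singular values of $g$ and $\frac{\sigma_i}{\sigma_j}(g)=\sigma_i(g)/\sigma_j(g)$. *)

(* Defs.v *)
From mathcomp Require Import all_boot all_order all_algebra.
From mathcomp Require Import all_classical all_reals all_analysis.
From mathcomp Require Import complex.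
Set Implicit Arguments. Unset Strict Implicit. Unset Printing Implicit Defensive.
Import Order.TTheory GRing.Theory Num.Theory.
Local Open Scope ring_scope.

(* Generic setting: a scalar field K with a conjugation [conj] (identity for
   K = R, complex conjugation for K = C) and the embedding [emb : R -> K] of
   the real numbers into K. *)
Section SingularValues.
Variables (R : realType) (K : numFieldType) (conj : K -> K) (emb : R -> K).

Definition adjmx (m n : nat) (A : 'M[K]_(m, n)) : 'M[K]_(n, m) :=
  map_mx conj A^T.

Definition unitary_mx (n : nat) (U : 'M[K]_n) : Prop :=
  U *m adjmx U = 1%:M.

(* Index i : 'I_n corresponds to sigma_(i+1). *)
Definition singular_values (n : nat) (g : 'M[K]_n) (s : 'I_n -> R) : Prop :=
  (forall i, 0 <= s i) /\
  (forall i j : 'I_n, (i <= j)%N -> s j <= s i) /\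
  exists U V : 'M[K]_n,
    [/\ unitary_mx U, unitary_mx V &
        g = U *m diag_mx (\row_i emb (s i)) *m adjmx V].

End SingularValues.

Definition singular_values_R (R : realType) (n : nat) (g : 'M[R]_n)
  (s : 'I_n -> R) : Prop :=
  @singular_values R R id id n g s.

Definition singular_values_C (R : realType) (n : nat) (g : 'M[R[i]]_n)
  (s : 'I_n -> R) : Prop :=
  @singular_values R R[i] conjc (real_complex R) n g s.

(* Main.v *)
Require Import Defs.
From mathcomp Require Import all_boot all_order all_algebra.
From mathcomp Require Import all_classical all_reals all_analysis.
From mathcomp Require Import complex.
From mathcomp Require Import lra.
Import Order.TTheory GRing.Theory Num.Theory.
Local Open Scope ring_scope.

Lemma key (R : realType) (n : nat) (a : nat -> R) (L e : R) : (0 < n)%N ->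
  0 <= L -> 0 < e -> e * n%:R < 2 ->
  (forall i, (i < n)%N -> a i.+1 <= a i) -> a 0%N = L -> a n = -L ->
  exists i, [/\ (i < n)%N, (1 - n.+1%:R * e) * L <= a i & e * L <= a i - a i.+1].
Proof.
move=> n0 L0 e0 en mono a0 an.
have [->|Lp] := eqVneq L 0.
  exists 0%N; split => //; first by rewrite a0 mulr0.
  by rewrite mulr0 subr_ge0 mono.
have {}Lp : 0 < L by rewrite lt_def Lp.
apply/not_existsP => H.
have ind : forall m, (m <= n)%N -> L - m%:R * e * L <= a m.
  elim=> [|m IH] Hm; first by rewrite a0 mul0r mul0r subr0.
  have Hm' : (m < n)%N by [].
  have h1 := IH (ltnW Hm).
  have h2 : (1 - n.+1%:R * e) * L <= a m.
    apply: le_trans h1.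
    have : m%:R <= n.+1%:R :> R by rewrite ler_nat ltnW // ltnW.
    move=> hmn.
    have : 0 <= (n.+1%:R - m%:R) * (e * L) by apply: mulr_ge0; [lra | exact: mulr_ge0 (ltW e0) (ltW Lp)].
    lra.
  have h3 : a m - a m.+1 < e * L.
    rewrite ltNge; apply/negP => h4; apply: (H m); split => //.
  rewrite -natr1; lra.
have := ind n (leqnn n); rewrite an => h.
have : 0 < (2 - e * n%:R) * L by apply: mulr_gt0; lra.
lra.
Qed.

Lemma sv_main (R : realType) n (s : 'I_n.+1 -> R) eps : (0 < n)%N -> 0 < s ord0 ->
  (forall i j : 'I_n.+1, (i <= j)%N -> s j <= s i) ->
  s ord_max = (s ord0)^-1 -> 0 < eps -> eps < 2 / n%:R ->
  exists i : 'I_n.+1, [/\ (i < n)%N,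
        s ord0 `^ (1 - n.+1%:R * eps) <= s i &
        s ord0 `^ eps <= s i / s (inord i.+1)].
Proof.
move=> n0 S0 mono smax e0 en.
have spos : forall i, 0 < s i.
  move=> i; apply: lt_le_trans (mono i ord_max _); last by rewrite -ltnS.
  by rewrite smax invr_gt0.
have S1 : 1 <= s ord0.
  rewrite leNgt; apply/negP => H.
  have : 1 < (s ord0)^-1 by rewrite invf_gt1.
  rewrite -smax => H2.
  have := mono ord0 ord_max (leq0n _); lra.
have en' : eps * n%:R < 2 by rewrite -ltr_pdivlMr ?ltr0n.
have mono' : forall k, (k < n)%N -> ln (s (inord k.+1)) <= ln (s (inord k)).
  move=> k kn; rewrite ler_ln ?posrE //; apply: mono; rewrite /= !inordK //.
  by rewrite ltnS ltnW.
have a0 : ln (s (inord 0)) = ln (s ord0).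
  by congr (ln (s _)); apply/val_inj; rewrite /= inordK.
have an : ln (s (inord n)) = - ln (s ord0).
  have -> : (inord n : 'I_n.+1) = ord_max by apply/val_inj; rewrite /= inordK.
  by rewrite smax lnV ?posrE.
have [i [Hi H1 H2]] := @key R n (fun k => ln (s (inord k))) (ln (s ord0)) eps n0
  (ln_ge0 S1) e0 en' mono' a0 an.
exists (inord i); have Hi' : (i < n.+1)%N by rewrite ltnS ltnW.
rewrite inordK //; split => //.
  by rewrite -ler_ln ?posrE ?powR_gt0 // ln_powR.
rewrite -ler_ln ?posrE ?powR_gt0 ?divr_gt0 // ln_powR lnM ?posrE ?invr_gt0 //.
by rewrite lnV ?posrE.
Qed.

Lemma sv_pos (R : realType) (K : numFieldType) (conj : K -> K) (emb : R -> K) n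
  (g : 'M[K]_n.+1) s : emb 0 = 0 -> g \in unitmx ->
  singular_values conj emb g s -> 0 < s ord0.
Proof.
move=> e0 gu [s0 [mono [U [V [hU hV hg]]]]].
rewrite lt_def s0 andbT; apply/eqP => S0.
have all0 : forall i, s i = 0.
  by move=> i; apply/le_anti; rewrite s0 -S0 mono.
have r0 : \row_i emb (s i) = 0 by apply/rowP => i; rewrite !mxE all0.
move: gu; rewrite hg r0.
have -> : diag_mx (0 : 'rV[K]_n.+1) = 0.
  by apply/matrixP => i j; rewrite !mxE mul0rn.
by rewrite mulmx0 mul0mx unitmxE det0 unitr0.
Qed.

Theorem lemma4p3 (R : realType) :
  (forall (n : nat) (g : 'M[R]_n.+1) (s : 'I_n.+1 -> R) (eps : R),
     (3 <= n)%N -> g \in unitmx -> singular_values_R g s ->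
     s ord_max = (s ord0)^-1 ->
     0 < eps -> eps < 2 / n%:R ->
     exists i : 'I_n.+1, [/\ (i < n)%N,
        s ord0 `^ (1 - n.+1%:R * eps) <= s i &
        s ord0 `^ eps <= s i / s (inord i.+1)])
  /\
  (forall (n : nat) (g : 'M[R[i]]_n.+1) (s : 'I_n.+1 -> R) (eps : R),
     (3 <= n)%N -> g \in unitmx -> singular_values_C g s ->
     s ord_max = (s ord0)^-1 ->
     0 < eps -> eps < 2 / n%:R ->
     exists i : 'I_n.+1, [/\ (i < n)%N,
        s ord0 `^ (1 - n.+1%:R * eps) <= s i &
        s ord0 `^ eps <= s i / s (inord i.+1)]).
Proof.
split.
- move=> n g s eps n3 gu sv smax e0 en.
  have S0 := @sv_pos R _ _ _ _ g s (erefl _) gu sv.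
  apply: sv_main => //; first exact: leq_trans n3.
  by case: sv => _ [].
- move=> n g s eps n3 gu sv smax e0 en.
  have S0 : 0 < s ord0.
    by apply: (@sv_pos R _ _ _ _ g s _ gu sv).
  apply: sv_main => //; first exact: leq_trans n3.
  by case: sv => _ [].
Qed.
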